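(* Let $\mathcal{H}$ be a separable infinite-dimensional complex Hilbert space, let $T\in\mathcal{B}(\mathcal{H})$ be quasinilpotent, and let $A\in\mathcal{B}(\mathcal{H})$ commute with $T$. If $x\in\mathcal{H}$ and $Ax\neq0$, then $k_{Ax}(T)\le k_x(T)$.
   Context: For quasinilpotent $T$ and $x\neq 0$, $k_x(T)=\limsup_{\lambda\to0}\frac{\ln\|(\lambda-T)^{-1}x\|}{\ln\|(\lambda-T)^{-1}\|}$. *)

(* Defs.v *)
From HB Require Import structures.
From mathcomp Require Import all_boot all_order all_algebra.
From mathcomp Require Import complex.
From mathcomp Require Import all_classical all_reals all_analysis.
Set Implicit Arguments. Unset Strict Implicit. Unset Printing Implicit Defensive.
Import Order.TTheory GRing.Theory Num.Theory ComplexField.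
Import numFieldNormedType.Exports.
Local Open Scope classical_set_scope.
Local Open Scope ring_scope.

Section Hilbert.
Variables (R : realType) (H : lmodType R[i]) (ip : H -> H -> R[i]).

Definition hnorm (x : H) : R := Num.sqrt (complex.Re (ip x x)).

Definition is_inner_product : Prop :=
  [/\ forall (a : R[i]) (x y z : H), ip (a *: x + y) z = a * ip x z + ip y z,
      forall x y : H, ip y x = (ip x y)^*,
      forall x : H, 0 <= ip x x
    & forall x : H, ip x x = 0 -> x = 0].

Definition hcomplete : Prop :=
  forall u : nat -> H,
    (forall e : R, 0 < e -> exists N : nat, forall m n : nat,
        (N <= m)%N -> (N <= n)%N -> hnorm (u m - u n) < e) ->
    exists l : H, forall e : R, 0 < e -> exists N : nat, forall n : nat,
        (N <= n)%N -> hnorm (u n - l) < e.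

Definition hseparable : Prop :=
  exists d : nat -> H, forall (x : H) (e : R), 0 < e ->
    exists n : nat, hnorm (x - d n) < e.

Definition infinite_dimensional : Prop :=
  forall n : nat, exists v : 'I_n -> H, forall c : 'I_n -> R[i],
    \sum_(j < n) c j *: v j = 0 -> forall j, c j = 0.

Definition is_sep_infdim_hilbert : Prop :=
  [/\ is_inner_product, hcomplete, hseparable & infinite_dimensional].

Definition bounded_op (T : H -> H) : Prop :=
  exists M : R, forall x : H, hnorm (T x) <= M * hnorm x.

Definition opnorm (T : H -> H) : R :=
  sup [set hnorm (T x) | x in [set x : H | hnorm x <= 1]].

Definition invertible_op (S : H -> H) : Prop :=
  exists g : {linear H -> H}, [/\ bounded_op g, cancel S g & cancel g S].

Definition spectrum (T : H -> H) : set R[i] :=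
  [set l | ~ invertible_op (fun x => l *: x - T x)].

Definition quasinilpotent (T : H -> H) : Prop := spectrum T = [set 0].

(* resolvent (l - T)^{-1}, defined pointwise as the (unique, when l is not in
   the spectrum) preimage of x under l - T *)
Definition resolvent (T : H -> H) (l : R[i]) (x : H) : H :=
  xget 0 [set y : H | l *: y - T y = x].

Definition kx (T : H -> H) (x : H) : \bar R :=
  limf_esup (fun l : R[i]^o =>
    (ln (hnorm (resolvent T l x)) / ln (opnorm (resolvent T l)))%:E)
    (dnbhs (0 : R[i]^o)).

End Hilbert.

(* Main.v *)
Require Import Defs.
From HB Require Import structures.
From mathcomp Require Import all_boot all_order all_algebra.
From mathcomp Require Import complex.
From mathcomp Require Import all_classical all_reals all_analysis.
From mathcomp Require Import lra ring.
Import Order.TTheory GRing.Theory Num.Theory ComplexField.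
Local Open Scope ring_scope.
Local Open Scope complex_scope.
Section S.
Variables (R : realType) (H : lmodType R[i]) (ip : H -> H -> R[i]).
Hypothesis hip : is_inner_product ip.

Let ipD (a : R[i]) (x y z : H) : ip (a *: x + y) z = a * ip x z + ip y z.
Proof. by case: hip => h _ _ _; apply: h. Qed.
Let ipC (x y : H) : ip y x = Num.conj (ip x y).
Proof. by case: hip => _ h _ _; apply: h. Qed.
Let ipge0 (x : H) : 0 <= ip x x.
Proof. by case: hip => _ _ h _; apply: h. Qed.
Let ipeq0 (x : H) : ip x x = 0 -> x = 0.
Proof. by case: hip => _ _ _ h; apply: h. Qed.

Lemma ip0l z : ip 0 z = 0.
Proof.
have := ipD 1 0 0 z; rewrite scale1r addr0 mul1r => /eqP.
by rewrite -subr_eq0 opprD addrA subrr add0r oppr_eq0 => /eqP.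
Qed.

Definition B x y := complex.Re (ip x y).
Definition q x := B x x.

Lemma ReD (a b : R[i]) : complex.Re (a + b) = complex.Re a + complex.Re b.
Proof. by case: a; case: b. Qed.
Lemma ReJ (a : R[i]) : complex.Re (Num.conj a) = complex.Re a.
Proof. by case: a. Qed.
Lemma ReMr (t : R) (a : R[i]) : complex.Re (t%:C * a) = t * complex.Re a.
Proof. by case: a => a b /=; rewrite mul0r subr0. Qed.

Lemma BC x y : B x y = B y x.
Proof. by rewrite /B ipC ReJ. Qed.

Lemma BDl (t : R) u v z : B (t%:C *: u + v) z = t * B u z + B v z.
Proof. by rewrite /B ipD ReD ReMr. Qed.

Lemma q_ge0 x : 0 <= q x.
Proof. by have := ipge0 x; rewrite lecE => /andP[]. Qed.

Lemma qt x y (t : R) : q (t%:C *: y + x) = t ^+ 2 * q y + 2 * t * B x y + q x.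
Proof.
rewrite /q BDl (BC y) (BC x) !BDl (BC y x); lra.
Qed.

Lemma q_eq0 x : q x = 0 -> x = 0.
Proof.
move=> h; apply: ipeq0; have := ipge0 x; rewrite lecE => /andP[/eqP hi _].
apply/eqP; rewrite eq_complex /= -/(B x x) -/(q x) h hi.
by rewrite /= !eqxx.
Qed.

Lemma B0r x : B x 0 = 0.
Proof. by rewrite BC /B ip0l. Qed.

Lemma CS x y : B x y ^+ 2 <= q x * q y.
Proof.
have [y0|] := eqVneq (q y) 0.
  by rewrite y0 (q_eq0 _ y0) B0r expr0n /= mulr0.
move=> qy0; have qyp : 0 < q y by rewrite lt0r qy0 q_ge0.
have := q_ge0 ((- B x y / q y)%:C *: y + x); rewrite qt.
move=> h.
have e : (- B x y / q y) ^+ 2 * q y + 2 * (- B x y / q y) * B x y + q x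
   = q x - B x y ^+ 2 / q y.
  by field; rewrite gt_eqF.
rewrite e subr_ge0 ler_pdivrMr // in h.
Qed.


Lemma hnormE x : hnorm ip x = Num.sqrt (q x).
Proof. by []. Qed.

Lemma hnorm_ge0 x : 0 <= hnorm ip x.
Proof. exact: sqrtr_ge0. Qed.

Lemma hnorm_eq0 x : hnorm ip x = 0 -> x = 0.
Proof.
rewrite hnormE => /eqP; rewrite sqrtr_eq0 => h; apply: q_eq0.
by apply/eqP; rewrite eq_le h q_ge0.
Qed.

Lemma hnorm0 : hnorm ip 0 = 0.
Proof. by rewrite hnormE /q /B ip0l /= sqrtr0. Qed.

Lemma hnormD x y : hnorm ip (x + y) <= hnorm ip x + hnorm ip y.
Proof.
rewrite !hnormE.
have e : q (x + y) = q y + 2 * B x y + q x.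
  have := qt x y 1; rewrite expr1n !mul1r mulr1 => <-.
  by rewrite addrC (_ : 1%:C = 1) // scale1r.
have hB : B x y <= Num.sqrt (q x) * Num.sqrt (q y).
  rewrite -sqrtrM ?q_ge0 //.
  apply: le_trans (ler_norm _) _.
  by rewrite -sqrtr_sqr ler_sqrt ?CS // mulr_ge0 ?q_ge0.
have sx := sqr_sqrtr (q_ge0 x); have sy := sqr_sqrtr (q_ge0 y).
have px := sqrtr_ge0 (q x); have py := sqrtr_ge0 (q y).
have hs : Num.sqrt (q x) + Num.sqrt (q y) = Num.sqrt ((Num.sqrt (q x) + Num.sqrt (q y)) ^+ 2).
  by rewrite sqrtr_sqr ger0_norm // addr_ge0.
rewrite hs ler_sqrt ?sqr_ge0 // e; nra.
Qed.

Lemma qZ (a : R[i]) x : q (a *: x) = (complex.Re a ^+ 2 + complex.Im a ^+ 2) * q x.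
Proof.
have h1 := ipD a x 0 (a *: x); rewrite addr0 ip0l addr0 in h1.
have h2 := ipD a x 0 x; rewrite addr0 ip0l addr0 in h2.
have h3 : ip x (a *: x) = Num.conj a * ip x x.
  by rewrite ipC h2 rmorphM /= -ipC.
have hi : complex.Im (ip x x) = 0 by apply: ger0_Im.
rewrite /q /B h1 h3; move: hi; case: (ip x x) => z1 z2 /= ->; clear h1 h2 h3; case: a => a1 a2 /=.
ring.
Qed.

Definition cn (a : R[i]) : R := Num.sqrt (complex.Re a ^+ 2 + complex.Im a ^+ 2).

Lemma cnE (a : R[i]) : `|a| = (cn a)%:C.
Proof. by rewrite normc_def. Qed.

Lemma cn_ge0 a : 0 <= cn a.
Proof. exact: sqrtr_ge0. Qed.

Lemma hnormZ (a : R[i]) x : hnorm ip (a *: x) = cn a * hnorm ip x.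
Proof. by rewrite !hnormE qZ sqrtrM ?addr_ge0 ?sqr_ge0. Qed.

Lemma hnormN x : hnorm ip (- x) = hnorm ip x.
Proof.
rewrite -scaleN1r hnormZ.
have -> : cn (-1 : R[i]) = 1.
  by rewrite /cn /= oppr0 expr0n /= addr0 sqrrN expr1n sqrtr1.
by rewrite mul1r.
Qed.

Lemma hnormB x y : hnorm ip (x - y) = hnorm ip (y - x).
Proof. by rewrite -hnormN opprB. Qed.


Lemma cnR (r : R) : cn r%:C = `|r|.
Proof. by rewrite /cn /= expr0n /= addr0 sqrtr_sqr. Qed.

Lemma archiN (c e : R) : 0 <= c -> 0 < e ->
  exists N : nat, forall n : nat, (N <= n)%N -> c / (n.+1)%:R < e.
Proof.
move=> c0 e0; exists (Num.Def.archi_bound (c / e)) => n hn.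
have h := archi_boundP (divr_ge0 c0 (ltW e0)).
rewrite ltr_pdivrMr ?ltr0Sn //.
rewrite -ltr_pdivrMl //.
rewrite mulrC; apply: (lt_le_trans h).
rewrite ler_nat; apply: (leq_trans hn); exact: leqnSn.
Qed.

Variable T : {linear H -> H}.

Definition SL (l : R[i]) := fun x : H => l *: x - T x.

Lemma SLZ l (c : R[i]) y : SL l (c *: y) = c *: SL l y.
Proof. by rewrite /SL scalerBr scalerA mulrC -scalerA; congr (_ - _); exact: linearZ. Qed.

Section Inv.
Variable l : R[i].
Hypothesis hinv : invertible_op ip (fun x => l *: x - T x).

Lemma res_spec z : SL l (resolvent T l z) = z.
Proof.
case: hinv => g [_ c1 c2].
by apply: (@xgetPex _ 0 [set y | l *: y - T y = z]); exists (g z); apply: c2.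
Qed.

Lemma res_uniq y z : SL l y = z -> resolvent T l z = y.
Proof.
move=> hy; case: hinv => g [_ c1 c2].
have e : forall y', SL l y' = z -> y' = g z by move=> y' <-; rewrite [RHS]c1.
by rewrite (e y hy); apply: xget_unique; [apply: c2 | move=> y' /e].
Qed.

Lemma resZ (c : R[i]) z : resolvent T l (c *: z) = c *: resolvent T l z.
Proof. by apply: res_uniq; rewrite SLZ res_spec. Qed.

Lemma res0 : resolvent T l 0 = 0.
Proof. by apply: res_uniq; rewrite /SL scaler0 raddf0 subr0. Qed.

Lemma res_bounded : exists M : R, forall z, hnorm ip (resolvent T l z) <= M * hnorm ip z.
Proof.
case: hinv => g [[M hM] c1 c2]; exists M => z.
suff -> : resolvent T l z = g z by [].
by apply: res_uniq; apply: c2.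
Qed.

Lemma res_opnorm z : hnorm ip (resolvent T l z) <= opnorm ip (resolvent T l) * hnorm ip z.
Proof.
have [->|z0] := eqVneq z 0; first by rewrite res0 hnorm0 mulr0.
have hz : 0 < hnorm ip z.
  by rewrite lt0r hnorm_ge0 andbT; apply/eqP => /hnorm_eq0; apply/eqP.
have [M hM] := res_bounded.
have ub : has_ubound [set hnorm ip (resolvent T l x) | x in [set x : H | hnorm ip x <= 1]].
  exists `|M| => _ [u hu <-].
  apply: (le_trans (hM u)); apply: (le_trans (ler_norm _)); rewrite normrM.
  rewrite -[leRHS]mulr1 ler_wpM2l //; apply: (le_trans (ler_norm _)).
  by rewrite normr_id ger0_norm ?hnorm_ge0.
set u := ((hnorm ip z)^-1)%:C *: z.
have hu : hnorm ip u = 1 by rewrite /u hnormZ cnR ger0_norm ?invr_ge0 ?hnorm_ge0 // mulVf // gt_eqF.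
have hu1 : hnorm ip u <= 1 by rewrite hu.
have := ub_le_sup ub (ex_intro2 _ _ u hu1 erefl).
rewrite /u resZ hnormZ cnR ger0_norm ?invr_ge0 ?hnorm_ge0 //.
by rewrite mulrC ler_pdivrMr // => h.
Qed.

End Inv.

Lemma inv_mono (N m : nat) : (N <= m)%N -> (m.+1%:R : R)^-1 <= (N.+1%:R)^-1.
Proof. by move=> h; rewrite lef_pV2 ?posrE ?ltr0Sn // ler_nat ltnS. Qed.

Section Blow.
Hypothesis hc : hcomplete ip.
Hypothesis hTb : bounded_op ip T.
Hypothesis qT : quasinilpotent ip T.

Lemma inv_nz l : l != 0 -> invertible_op ip (fun x => l *: x - T x).
Proof.
move=> l0; apply: contrapT => ni.
have : spectrum ip T l by [].
by rewrite qT /= => e; rewrite e eqxx in l0.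
Qed.

Lemma not_inv0 : ~ invertible_op ip (fun x => 0 *: x - T x).
Proof. by have : spectrum ip T 0 by rewrite qT. Qed.

Lemma T_pos_bound : exists2 M, 0 < M & forall w, hnorm ip (T w) <= M * hnorm ip w.
Proof.
case: hTb => M hM; exists (`|M| + 1) => [|w]; first by rewrite ltr_wpDl.
apply: (le_trans (hM w)); rewrite ler_wpM2r ?hnorm_ge0 //.
by apply: (le_trans (ler_norm _)); rewrite lerDl.
Qed.

Lemma key (K : R) : 1 <= K ->
  (forall n : nat, exists l, [/\ l != 0, cn l < (2 * K * n.+1%:R)^-1
                             & opnorm ip (resolvent T l) <= K]) -> False.
Proof.
move=> K1 hex; case: (choice hex) => ls hls.
have K0 : 0 < K by apply: lt_le_trans K1.
have inv n : invertible_op ip (fun x => ls n *: x - T x).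
  by apply: inv_nz; case: (hls n).
have bnd n z : hnorm ip (resolvent T (ls n) z) <= K * hnorm ip z.
  apply: (le_trans (@res_opnorm (ls n) (inv n) z)); rewrite ler_wpM2r ?hnorm_ge0 //.
  by case: (hls n).
have small n : K * cn (ls n) <= (2 * n.+1%:R)^-1.
  case: (hls n) => _ h _.
  have h2 : K * cn (ls n) < K * (2 * K * n.+1%:R)^-1 by rewrite ltr_pM2l.
  apply: (le_trans (ltW h2)).
  have -> : K * (2 * K * n.+1%:R)^-1 = (2 * n.+1%:R)^-1.
    by field; rewrite nat1r (gt_eqF K0) pnatr_eq0.
  by [].
have below y : hnorm ip y <= 2 * K * hnorm ip (T y).
  set l := ls 0%N.
  have e : resolvent T l (SL l y) = y by apply: (@res_uniq l (inv 0%N)).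
  have h1 := bnd 0%N (SL l y); rewrite e in h1.
  have h2 : hnorm ip (SL l y) <= cn l * hnorm ip y + hnorm ip (T y).
    by rewrite /SL -hnormZ -(hnormN (T y)); apply: hnormD.
  have h3 : K * hnorm ip (SL l y) <= K * (cn l * hnorm ip y + hnorm ip (T y)).
    by rewrite ler_wpM2l // ltW.
  have h4 : K * cn l * hnorm ip y <= (2 * 1%:R)^-1 * hnorm ip y.
    by rewrite ler_wpM2r ?hnorm_ge0 //; apply: small.
  rewrite mulr1 in h4.
  have := hnorm_ge0 y; have := hnorm_ge0 (T y).
  move: h1 h3 h4; set a := hnorm ip y; set b := hnorm ip (T y);
   set c := hnorm ip (SL l y); set k := cn l => h1 h3 h4 hb ha.
  have h5 : a <= K * k * a + K * b by rewrite -mulrA -mulrDr; apply: (le_trans h1).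
  lra.
have [Mp Mp0 hMp] := T_pos_bound.
have surj z : exists y, T y = z.
  set hz := hnorm ip z.
  pose y n := resolvent T (ls n) (- z).
  have Ty n : T (y n) = ls n *: y n + z.
    have := @res_spec (ls n) (inv n) (- z); rewrite /SL -/(y n) => /eqP.
    by rewrite subr_eq addrC -subr_eq opprK => /eqP <-.
  have yb n : hnorm ip (y n) <= K * hz by rewrite /hz -(hnormN z); apply: bnd.
  have Tz n : hnorm ip (T (y n) - z) <= hz * (2 * n.+1%:R)^-1.
    rewrite Ty addrK hnormZ.
    have := small n; have := cn_ge0 (ls n); have := yb n; have := hnorm_ge0 (y n).
    have := hnorm_ge0 z; rewrite -/hz.
    set w := (2 * n.+1%:R)^-1; set c := cn (ls n); set a := hnorm ip (y n).
    move=> hz0 a0 ab c0 cs.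
    have t1 : c * a <= c * (K * hz) by rewrite ler_wpM2l.
    have t2 : K * c * hz <= w * hz by rewrite ler_wpM2r.
    lra.
  have Tz2 n : hnorm ip (T (y n) - z) <= hz * (n.+1%:R)^-1.
    apply: (le_trans (Tz n)); rewrite ler_wpM2l ?hnorm_ge0 //.
    rewrite lef_pV2 ?posrE ?mulr_gt0 ?ltr0Sn // ler_peMl ?ler1n //.
  have cauchy : forall e : R, 0 < e -> exists N : nat, forall m n : nat,
      (N <= m)%N -> (N <= n)%N -> hnorm ip (y m - y n) < e.
    move=> e e0; have [N hN] := archiN _ _ (mulr_ge0 (mulr_ge0 (ler0n _ 2) (ltW K0)) (hnorm_ge0 z)) e0.
    exists N => m n hm hn.
    have h1 := below (y m - y n).
    have e1 : T (y m - y n) = (T (y m) - z) - (T (y n) - z).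
      by rewrite linearB opprB addrA subrK.
    rewrite e1 in h1.
    have h2 := hnormD (T (y m) - z) (- (T (y n) - z)); rewrite hnormN in h2.
    have h3 := Tz m; have h4 := Tz n.
    have h5 := inv_mono _ _ hm; have h6 := inv_mono _ _ hn.
    have h7 := hN N (leqnn N).
    have hzp := hnorm_ge0 z; rewrite -/hz in hzp h7.
    have i1 : hz * (2 * m.+1%:R)^-1 <= hz * (2 * N.+1%:R)^-1.
      rewrite ler_wpM2l // lef_pV2 ?posrE ?mulr_gt0 ?ltr0Sn // ler_wpM2l // ler_nat ltnS //.
    have i2 : hz * (2 * n.+1%:R)^-1 <= hz * (2 * N.+1%:R)^-1.
      rewrite ler_wpM2l // lef_pV2 ?posrE ?mulr_gt0 ?ltr0Sn // ler_wpM2l // ler_nat ltnS //.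
    have e2 : 2 * K * hz / N.+1%:R = 2 * K * (2 * (hz * (2 * N.+1%:R)^-1))
      by field; rewrite nat1r pnatr_eq0.
    rewrite e2 in h7.
    set s := hz * (2 * N.+1%:R)^-1 in i1 i2 h7.
    have := hnorm_ge0 (T (y m) - z - (T (y n) - z)).
    move: h1 h2 h3 h4 h7 i1 i2.
    set A := hnorm ip (y m - y n).
    set B1 := hnorm ip (T (y m) - z - (T (y n) - z)).
    set C1 := hnorm ip (T (y m) - z).
    set C2 := hnorm ip (T (y n) - z).
    move=> h1 h2 h3 h4 h7 i1 i2 hB.
    have : 2 * K * B1 <= 2 * K * (2 * s).
      apply: ler_wpM2l; first by rewrite mulr_ge0 // ltW.
      move: h3 h4 i1 i2; set u := hz / (2 * m.+1%:R); set v := hz / (2 * n.+1%:R). lra.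
    lra.
  have [yl hyl] := hc y cauchy.
  exists yl; apply/eqP; rewrite -subr_eq0; apply/eqP/hnorm_eq0.
  apply/eqP; rewrite eq_le hnorm_ge0 andbT.
  apply/ler_addgt0Pr => e e0; rewrite add0r.
  have e20 : 0 < e / (2 * Mp) by rewrite divr_gt0 ?mulr_gt0.
  have [N1 hN1] := hyl _ e20.
  have [N2 hN2] := archiN _ _ (hnorm_ge0 z) (divr_gt0 e0 (ltr0n _ 2)).
  set n := maxn N1 N2.
  have h1 := hN1 n (leq_maxl _ _).
  have h2 := hN2 n (leq_maxr _ _).
  have h3 := Tz2 n.
  have e1 : T yl - z = - T (y n - yl) + (T (y n) - z).
    by rewrite linearB opprB addrA subrK.
  rewrite e1; apply: (le_trans (hnormD _ _)); rewrite hnormN.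
  have h4 := hMp (y n - yl).
  have h5 : Mp * hnorm ip (y n - yl) <= Mp * (e / (2 * Mp)) by rewrite ler_wpM2l ?ltW.
  have e3 : Mp * (e / (2 * Mp)) = e / 2 by field; rewrite gt_eqF.
  rewrite e3 in h5; rewrite -/hz in h2 h3.
  move: h2 h3 h4 h5; set u := hz / n.+1%:R; lra.
pose g z := xget 0 [set y | 0 *: y - T y = z].
have S0E y : 0 *: y - T y = - T y by rewrite scale0r add0r.
have gspec z : 0 *: g z - T (g z) = z.
  apply: (@xgetPex _ 0 [set y | 0 *: y - T y = z]).
  have [y hy] := surj (- z); exists y.
  by rewrite /= S0E hy opprK.
have inj a b : 0 *: a - T a = 0 *: b - T b -> a = b.
  rewrite !S0E => /eqP; rewrite eqr_opp -subr_eq0 -linearB => /eqP h.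
  apply/eqP; rewrite -subr_eq0; apply/eqP/hnorm_eq0.
  apply/eqP; rewrite eq_le hnorm_ge0 andbT.
  by apply: (le_trans (below _)); rewrite h hnorm0 mulr0.
have c1 : cancel (fun x => 0 *: x - T x) g by move=> y; apply: inj; rewrite gspec.
have c2 : cancel g (fun x => 0 *: x - T x) by move=> z; apply: gspec.
have glin : linear g.
  have hTg w : T (g w) = - w by rewrite -[in RHS](gspec w) S0E opprK.
  move=> a u v; apply: inj; rewrite gspec !S0E linearD linearZ /=.
  by rewrite !hTg scalerN -opprD opprK.
pose G : {linear H -> H} := HB.pack g (GRing.isLinear.Build _ _ _ _ g glin).
apply: not_inv0; exists G; split => //.
exists (2 * K) => z; apply: (le_trans (below _)).
have : T (g z) = - z by rewrite -[in RHS](gspec z) S0E opprK.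
by rewrite /= => ->; rewrite hnormN.
Qed.

Lemma blowup (K : R) : exists2 d : R, 0 < d &
  forall l, l != 0 -> cn l < d -> K < opnorm ip (resolvent T l).
Proof.
set K1 := Num.max K 1.
have K11 : 1 <= K1 by rewrite le_max lexx orbT.
have KK1 : K <= K1 by rewrite le_max lexx.
apply: contrapT => nh; apply: (@key K1 K11) => n.
apply: contrapT => nn; apply: nh.
exists (2 * K1 * n.+1%:R)^-1.
  by rewrite invr_gt0 !mulr_gt0 ?ltr0Sn // (lt_le_trans ltr01 K11).
move=> l l0 hl; rewrite ltNge; apply/negP => hle; apply: nn.
by exists l; split => //; apply: (le_trans hle).
Qed.

Lemma ratio_bound (A : {linear H -> H}) (M : R) (x : H) (l : R[i]) (e : R) :
  1 <= M -> (forall w, hnorm ip (A w) <= M * hnorm ip w) ->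
  (forall y : H, A (T y) = T (A y)) -> A x != 0 -> 0 < e ->
  invertible_op ip (fun x => l *: x - T x) ->
  expR (ln M / e) < opnorm ip (resolvent T l) ->
  ln (hnorm ip (resolvent T l (A x))) / ln (opnorm ip (resolvent T l))
  <= ln (hnorm ip (resolvent T l x)) / ln (opnorm ip (resolvent T l)) + e.
Proof.
move=> M1 hM hAT hAx e0 hinv hK.
have M0 : 0 < M by apply: lt_le_trans M1.
set Rx := resolvent T l x.
have com : resolvent T l (A x) = A Rx.
  apply: (@res_uniq l hinv); rewrite /SL -hAT.
  have -> : l *: A Rx = A (l *: Rx) by rewrite linearZ.
  by rewrite -raddfB; congr (A _); apply: (@res_spec l hinv).
have x0 : x != 0 by apply: contraNneq hAx => ->; rewrite raddf0.
have pos w : w != 0 -> 0 < hnorm ip w.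
  by move=> w0; rewrite lt0r hnorm_ge0 andbT; apply/eqP => /hnorm_eq0; apply/eqP.
have Rx0 : Rx != 0.
  apply: contraNneq x0 => h; rewrite -(@res_spec l hinv x) -/Rx h.
  by rewrite /SL scaler0 raddf0 subr0.
have ARx0 : A Rx != 0.
  apply: contraNneq hAx => h; rewrite -(@res_spec l hinv (A x)) com h.
  by rewrite /SL scaler0 raddf0 subr0.
set L := ln (opnorm ip (resolvent T l)).
have Kp := expR_gt0 (ln M / e).
have opp : 0 < opnorm ip (resolvent T l) by apply: lt_trans hK.
have hL : ln M / e < L by rewrite /L -(expRK (ln M / e)) ltr_ln ?posrE.
have lM0 : 0 <= ln M by apply: ln_ge0.
have L0 : 0 < L by apply: le_lt_trans hL; rewrite divr_ge0 // ltW.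
have hle : ln M <= e * L by rewrite mulrC -ler_pdivrMr //; apply: ltW.
have hln : ln (hnorm ip (A Rx)) <= ln M + ln (hnorm ip Rx).
  rewrite -lnM ?posrE ?pos //.
  by rewrite ler_ln ?posrE ?mulr_gt0 ?pos // hM.
rewrite com.
rewrite -[X in _ <= _ + X](mulfK (lt0r_neq0 L0)).
rewrite -mulrDl; apply: ler_wpM2r; first by rewrite invr_ge0 ltW.
lra.
Qed.

Lemma main_kx (A : {linear H -> H}) (hA : bounded_op ip A)
  (hAT : forall y : H, A (T y) = T (A y)) (x : H) (hAx : A x != 0) :
  (kx ip T (A x) <= kx ip T x)%E.
Proof.
case: hA => M0 hM0.
set M := `|M0| + 1.
have M1 : 1 <= M by rewrite /M lerDr.
have hM w : hnorm ip (A w) <= M * hnorm ip w.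
  apply: (le_trans (hM0 w)); rewrite ler_wpM2r ?hnorm_ge0 //.
  by apply: (le_trans (ler_norm _)); rewrite /M lerDl.
rewrite /kx /limf_esup.
apply: le_ereal_inf_tmp => _ [V FV <-].
apply/lee_addgt0Pr => e e0.
have [d d0 hd] := blowup (expR (ln M / e)).
set W0 := [set l : R[i]^o | l != 0 /\ cn l < d]%classic.
have FW0 : dnbhs (0 : R[i]^o) W0.
  apply/nbhs_ballP; exists (d%:C); first by rewrite /= ltcR.
  move=> l /=; rewrite -ball_normE /= sub0r normrN cnE ltcR => hl l0.
  by split.
have FW : dnbhs (0 : R[i]^o) (V `&` W0)%classic by apply: filterI.
apply: ereal_inf_le; eexists; first by exists (V `&` W0)%classic.
apply: ge_ereal_sup => _ [l [Vl [l0 ld]] <-].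
apply: (@le_trans _ _ ((ln (hnorm ip (resolvent T l x)) /
    ln (opnorm ip (resolvent T l)))%:E + e%:E)).
  rewrite -EFinD lee_fin; apply: (@ratio_bound A M) => //.
    exact: inv_nz.
  exact: hd.
apply: leeD2r; apply: ereal_sup_ubound.
by exists l.
Qed.

End Blow.

End S.

Theorem lemma4p7 (R : realType) (H : lmodType R[i]) (ip : H -> H -> R[i])
  (hH : is_sep_infdim_hilbert ip)
  (T A : {linear H -> H})
  (hT : bounded_op ip T) (hA : bounded_op ip A)
  (qT : quasinilpotent ip T)
  (hAT : forall y : H, A (T y) = T (A y))
  (x : H) (hAx : A x != 0) :
  (kx ip T (A x) <= kx ip T x)%E.
Proof.
case: hH => hip hc _ _.
exact: (@main_kx R H ip hip T hc hT qT A hA hAT x hAx).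
Qed.
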